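(* Let $\mathbb{F}$ be an algebraically closed field of characteristic $p>2$. Let $(V,[\cdot,\cdot]_V,\alpha_V,B_V)$ be an involutive quadratic Hom-Lie algebra over $\mathbb{F}$, $\mathscr{D}\in\mathrm{Der}_{\alpha_V}(V)$ such that $B_V$ is $\mathscr{D}$-invariant, and $x_0\in V$, $\lambda,\lambda_0\in\mathbb{F}$ with $\lambda\mathscr{D}+\mathrm{ad}_V(x_0)=\mathscr{D}$, $\alpha_V(\mathscr{D}(x_0))=-\mathscr{D}(x_0)$, $\alpha_V\circ\mathscr{D}^2-\mathscr{D}^2\circ\alpha_V=\mathrm{ad}_V(\mathscr{D}(x_0))$. Let $L=\mathbb{F}e^*\oplus V\oplus\mathbb{F}e$ with the skew-symmetric bilinear bracket $[x,y]=[x,y]_V+B_V(\mathscr{D}(x),y)e$, $[e^*,x]=-[x,e^*]=\mathscr{D}(x)$ ($x,y\in V$), $[e^*,e^*]=0$, $[e,z]=[z,e]=0$ ($z\in L$), and twist $\alpha(x)=\alpha_V(x)+B_V(x_0,x)e$, $\alpha(e^* )=\lambda e^*+x_0+\lambda_0e$, $\alpha(e)=\lambda e$. Then for all $u,v\in V$ and $1\le i\le p-1$, $s_i^L(u,v)=s_i^V(u,v)+\eta_i^V(u,v)e$.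
   Context: Hom-Lie algebra: $(\mathfrak g,[\cdot,\cdot],\alpha)$ with $[x,y]=-[y,x]$, $[\alpha(x),[y,z]]+[\alpha(y),[z,x]]+[\alpha(z),[x,y]]=0$, $\alpha([x,y])=[\alpha x,\alpha y]$; involutive: $\alpha^2=\mathrm{id}$; quadratic: symmetric nondegenerate bilinear $B$ with $B([x,y],z)=B(x,[y,z])$ and $B(\alpha x,y)=B(x,\alpha y)$. $\mathrm{Der}_{\alpha_V}(V)$: linear $\mathscr{D}$ with $\mathscr{D}\alpha_V=\alpha_V\mathscr{D}$, $\mathscr{D}[x,y]_V=[\mathscr{D}x,\alpha_Vy]_V+[\alpha_Vx,\mathscr{D}y]_V$. For $p>2$, $B_V$ is $\mathscr{D}$-invariant if $B_V(\mathscr{D}x,y)+B_V(x,\mathscr{D}y)=0$. For a Hom-Lie algebra $\mathfrak g$ with twist $\alpha$, the elements $s_i^{\mathfrak g}(x,y)$ ($1\le i\le p-1$) are defined by the polynomial identity in $k\in\mathbb{F}$: $\mathrm{ad}(\alpha^{p-2}(kx+y))\circ\mathrm{ad}(\alpha^{p-3}(kx+y))\circ\cdots\circ\mathrm{ad}(kx+y)(x)=\sum_{i=1}^{p-1}is_i^{\mathfrak g}(x,y)k^{i-1}$ (here $\mathrm{ad}(z)=[z,\cdot]$; $s_i^L$ uses $L$'s bracket and $\alpha$, $s_i^V$ uses $[\cdot,\cdot]_V,\alpha_V$). The scalars $\eta_i^V(u,v)$ are defined by $B_V\big(\mathscr{D}(\alpha_V^{p-2}(ku+v)),\mathrm{ad}_V(\alpha_V^{p-3}(ku+v))\circ\cdots\circ\mathrm{ad}_V(ku+v)(u)\big)=\sum_{i=1}^{p-1}i\eta_i^V(u,v)k^{i-1}$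 for all $k\in\mathbb{F}$. *)

(* Defs.v *)
From HB Require Import structures.
From mathcomp Require Import all_boot all_order all_algebra.
Set Implicit Arguments. Unset Strict Implicit. Unset Printing Implicit Defensive.
Import Order.TTheory GRing.Theory Num.Theory.
Local Open Scope ring_scope.

Fixpoint adchain (T : Type) (br : T -> T -> T) (al : T -> T) (n : nat) (z w : T) : T :=
  match n with
  | O => w
  | S n' => br (iter n' al z) (adchain br al n' z w)
  end.

(* s : nat -> T satisfies the defining polynomial identity of the s_i(x,y),
   i.e. for all k,
   ad(al^(p-2)(kx+y)) o ... o ad(kx+y) (x) = sum_{i=1}^{p-1} i s_i k^(i-1). *)
Definition is_s_family (F : fieldType) (T : lmodType F) (p : nat)
  (br : T -> T -> T) (al : T -> T) (x y : T) (s : nat -> T) : Prop :=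
  forall k : F,
    adchain br al p.-1 (k *: x + y) x
    = \sum_(1 <= i < p) ((i%:R * k ^+ i.-1) *: s i).

(* eta : nat -> F satisfies the defining identity of the eta_i^V(u,v):
   B(D(al^(p-2)(ku+v)), ad(al^(p-3)(ku+v)) o ... o ad(ku+v)(u))
     = sum_{i=1}^{p-1} i eta_i k^(i-1). *)
Definition is_eta_family (F : fieldType) (V : lmodType F) (p : nat)
  (brV : V -> V -> V) (alV : V -> V) (B : V -> V -> F) (D : V -> V)
  (u v : V) (eta : nat -> F) : Prop :=
  forall k : F,
    B (D (iter p.-2 alV (k *: u + v))) (adchain brV alV p.-2 (k *: u + v) u)
    = \sum_(1 <= i < p) (i%:R * eta i * k ^+ i.-1).

(* The extension L = F estar (+) V (+) F e, an element (a, x, b) stands for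
   a estar + x + b e. *)
Definition Lext (F : fieldType) (V : lmodType F) : lmodType F :=
  (F^o * V * F^o)%type.

Definition embV (F : fieldType) (V : lmodType F) (x : V) : Lext V :=
  ((0 : F^o), x, (0 : F^o)).

Definition e_vec (F : fieldType) (V : lmodType F) : Lext V :=
  ((0 : F^o), (0 : V), (1 : F^o)).

Definition brL (F : fieldType) (V : lmodType F)
  (brV : V -> V -> V) (B : V -> V -> F) (D : V -> V) (X Y : Lext V) : Lext V :=
  let: (a, x, _) := X in let: (a', y, _) := Y in
  ((0 : F^o), brV x y + a *: D y - a' *: D x, (B (D x) y : F^o)).

Definition alL (F : fieldType) (V : lmodType F)
  (alV : V -> V) (B : V -> V -> F) (x0 : V) (lam lam0 : F) (X : Lext V) : Lext V :=
  let: (a, x, b) := X in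
  ((a * lam : F^o), alV x + a *: x0, (a * lam0 + B x0 x + b * lam : F^o)).

(* Main.v *)
Require Import Defs.
From HB Require Import structures.
From mathcomp Require Import all_boot all_order all_algebra.
Import GRing.Theory.
Local Open Scope ring_scope.
Lemma vdm (F : fieldType) (W : lmodType F) n (a0 : 'I_n -> F) (c : 'I_n -> W) :
  (forall i j : 'I_n, (i < j)%N -> a0 i != a0 j) ->
  (forall j : 'I_n, \sum_(i < n) (a0 j ^+ i) *: c i = 0) -> forall l, c l = 0.
Proof.
move=> Hd0 H0 l.
pose a := \row_(j < n) a0 j.
have Hd : forall i j : 'I_n, (i < j)%N -> a 0 i != a 0 j by move=> i j ij; rewrite /a !mxE; exact: Hd0.
have H : forall j : 'I_n, \sum_(i < n) (a 0 j ^+ i) *: c i = 0 by move=> j; rewrite /a mxE; exact: H0.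
have Hu : Vandermonde n a \in unitmx.
  rewrite unitmxE det_Vandermonde unitfE; apply/prodf_neq0 => i _; apply/prodf_neq0 => j ij.
  by rewrite subr_eq0 eq_sym; exact: Hd.
have E := mulmxV Hu.
transitivity (\sum_(i<n) (1%:M : 'M[F]_n) i l *: c i).
  rewrite (bigD1 l) //= big1 ?addr0; first by rewrite mxE eqxx scale1r.
  by move=> i /negbTE; rewrite mxE => ->; rewrite scale0r.
rewrite -E.
under eq_bigr => i _ do rewrite mxE scaler_suml.
rewrite exchange_big /=; apply: big1 => j _.
under eq_bigr => i _ do rewrite mxE mulrC -scalerA.
by rewrite -scaler_sumr H scaler0.
Qed.

Section S.
Variables (F : fieldType) (V : lmodType F) (brV : V -> V -> V) (alV : V -> V) (B : V -> V -> F) (D : V -> V) (x0 : V) (lam lam0 : F).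

Lemma iterL n x b : exists b', iter n (alL alV B x0 lam lam0) (((0:F^o), x), b) = ((0:F^o), iter n alV x, b').
Proof.
elim: n => [|n [b' IH]] /=; first by exists b.
rewrite IH /alL; eexists; by rewrite mul0r scale0r addr0.
Qed.

Lemma adL0 n z w : exists c, adchain (brL brV B D) (alL alV B x0 lam lam0) n (((0:F^o), z), (0:F^o)) (((0:F^o), w), (0:F^o))
  = ((0:F^o), adchain brV alV n z w, c).
Proof.
elim: n => [|n [c IH]] /=; first by exists 0.
have [b' ->] := iterL n z 0.
rewrite IH /brL; eexists; by rewrite !scale0r subr0 addr0.
Qed.

Lemma adL n z w : adchain (brL brV B D) (alL alV B x0 lam lam0) n.+1 (((0:F^o), z), (0:F^o)) (((0:F^o), w), (0:F^o))
  = ((0:F^o), adchain brV alV n.+1 z w, (B (D (iter n alV z)) (adchain brV alV n z w) : F^o)).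
Proof.
rewrite /=; have [b' ->] := iterL n z 0; have [c ->] := adL0 n z w.
by rewrite /brL !scale0r subr0 addr0.
Qed.

Lemma sum_trip (r : seq nat) (g : nat -> V) (h : nat -> F) :
  \sum_(i <- r) ((((0:F^o), g i), (h i : F^o)) : Lext V) = ((0:F^o), \sum_(i <- r) g i, (\sum_(i <- r) h i : F^o)).
Proof.
elim: r => [|a r IH]; first by rewrite !big_nil.
rewrite !big_cons IH; apply/eqP; rewrite /eq_op /= /eq_op /= !eqxx add0r eqxx /=; exact/eqP.
Qed.
End S.

Theorem lemma4p3
  (F : closedFieldType) (p : nat) (Hchar : p \in [pchar F]) (Hp2 : (2 < p)%N)
  (V : lmodType F) (brV : V -> V -> V) (alV : V -> V) (B : V -> V -> F)
  (* [.,.]_V is bilinear and skew-symmetric *)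
  (brV_linl : forall (a : F) (x y z : V), brV (a *: x + y) z = a *: brV x z + brV y z)
  (brV_linr : forall (a : F) (x y z : V), brV z (a *: x + y) = a *: brV z x + brV z y)
  (brV_skew : forall x y : V, brV x y = - brV y x)
  (* Hom-Jacobi identity *)
  (brV_jacobi : forall x y z : V,
      brV (alV x) (brV y z) + brV (alV y) (brV z x) + brV (alV z) (brV x y) = 0)
  (* alpha_V linear, multiplicative, involutive *)
  (alV_lin : forall (a : F) (x y : V), alV (a *: x + y) = a *: alV x + alV y)
  (alV_mult : forall x y : V, alV (brV x y) = brV (alV x) (alV y))
  (alV_invol : forall x : V, alV (alV x) = x)
  (* B_V symmetric, bilinear, nondegenerate, invariant, alpha-symmetric *)
  (B_linl : forall (a : F) (x y z : V), B (a *: x + y) z = a * B x z + B y z)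
  (B_linr : forall (a : F) (x y z : V), B z (a *: x + y) = a * B z x + B z y)
  (B_sym : forall x y : V, B x y = B y x)
  (B_nondeg : forall x : V, (forall y : V, B x y = 0) -> x = 0)
  (B_inv : forall x y z : V, B (brV x y) z = B x (brV y z))
  (B_alpha : forall x y : V, B (alV x) y = B x (alV y))
  (* D in Der_{alpha_V}(V) *)
  (D : V -> V)
  (D_lin : forall (a : F) (x y : V), D (a *: x + y) = a *: D x + D y)
  (D_alV : forall x : V, D (alV x) = alV (D x))
  (D_der : forall x y : V, D (brV x y) = brV (D x) (alV y) + brV (alV x) (D y))
  (* B_V is D-invariant *)
  (B_D : forall x y : V, B (D x) y + B x (D y) = 0)
  (x0 : V) (lam lam0 : F)
  (H1 : forall x : V, lam *: D x + brV x0 x = D x)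
  (H2 : alV (D x0) = - D x0)
  (H3 : forall x : V, alV (D (D x)) - D (D (alV x)) = brV (D x0) x)
  (u v : V) (sL : nat -> Lext V) (sV : nat -> V) (eta : nat -> F)
  (HsL : is_s_family p (brL brV B D) (alL alV B x0 lam lam0) (embV u) (embV v) sL)
  (HsV : is_s_family p brV alV u v sV)
  (Heta : is_eta_family p brV alV B D u v eta) :
  forall i : nat, (1 <= i < p)%N -> sL i = embV (sV i) + eta i *: e_vec V.
Proof.
move=> i Hi.
set T := fun i => embV (sV i) + eta i *: e_vec V.
have HT j : T j = (((0:F^o), sV j), (eta j : F^o)).
  apply/eqP; rewrite /T /eq_op /= /eq_op /= ?mulr0 ?addr0 ?scaler0 ?addr0 ?mulr1 ?add0r ?scale0r ?mul0r; rewrite ?eqxx /=; apply/eqP; try exact: mulr1.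
have HZ c j : c *: T j = (((0:F^o), c *: sV j), (c * eta j : F^o)).
  rewrite HT; apply/eqP; rewrite /eq_op /= /eq_op /= ?mulr0 ?scaler0 ?eqxx /=; apply/eqP; exact/eqP.
have Ep : p.-1 = (p.-2).+1 by case: (p) Hp2 => [|[|[|q]]].
have Hk : forall k : F, \sum_(j < p.-1) k ^+ j *: (j.+1%:R *: (sL j.+1 - T j.+1)) = 0.
  move=> k.
  have E : k *: embV u + embV v = (((0:F^o), k *: u + v), (0:F^o)).
    apply/eqP; rewrite /eq_op /= /eq_op /= ?mulr0 ?addr0 ?scaler0 ?eqxx /=; apply/eqP; try reflexivity; try exact: mulr0.
  have H := HsL k; have HV := HsV k; have He := Heta k.
  rewrite Ep in HV; rewrite E /embV Ep adL HV He in H.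
  have H' : \sum_(1 <= i < p) ((i%:R * k ^+ i.-1) *: T i) = \sum_(1 <= i < p) ((i%:R * k ^+ i.-1) *: sL i).
    rewrite -H; under eq_bigr => j _ do rewrite HZ.
    rewrite sum_trip; congr (_, _, _); apply: eq_bigr => j _; by rewrite mulrAC.
  have H0 : \sum_(1 <= i < p) ((i%:R * k ^+ i.-1) *: (sL i - T i)) = 0.
    under eq_bigr => j _ do rewrite scalerBr.
    by rewrite sumrB H' subrr.
  rewrite -[RHS]H0 big_add1 /= big_mkord; apply: eq_bigr => j _.
  by rewrite scalerA mulrC.
pose a := fun j : 'I_p.-1 => ((j : nat)%:R : F).
have Hd : forall j l : 'I_p.-1, (j < l)%N -> a j != a l.
  move=> j l jl; rewrite /a eq_sym -subr_eq0 -(natrB _ (ltnW jl)).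
  rewrite -(dvdn_pcharf Hchar) gtnNdvd.
  - by [].
  - by rewrite subn_gt0.
  - apply: leq_ltn_trans (leq_subr _ _) _; apply: leq_trans (ltn_ord l) _; exact: leq_pred.
have Hh : forall j : 'I_p.-1, \sum_(l < p.-1) a j ^+ l *: (l.+1%:R *: (sL l.+1 - T l.+1)) = 0.
  move=> j; exact: Hk.
have Hip : (i.-1 < p.-1)%N.
  case/andP: Hi => Hi1 Hi2; rewrite (prednK Hi1) -ltnS (ltn_predK Hi2) //.
have Hc : i.-1.+1%:R *: (sL i.-1.+1 - T i.-1.+1) = 0 :=
  @vdm F (Lext V) p.-1 a (fun j => j.+1%:R *: (sL j.+1 - T j.+1)) Hd Hh (Ordinal Hip).
have Hi1 : (0 < i)%N by case/andP: Hi.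
rewrite (prednK Hi1) in Hc.
have Hn : (i%:R : F) != 0.
  case/andP: Hi => _ Hi2; by rewrite -(dvdn_pcharf Hchar) (gtnNdvd Hi1 Hi2).
change (sL i = T i); apply/eqP; rewrite -subr_eq0; apply/eqP.
by rewrite -[sL i - T i]scale1r -(mulVf Hn) -scalerA Hc scaler0.
Qed.
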